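(* Let $d\in\mathbb{N}$, $d\geq 2$, $L\geq 1$, $X\subseteq \mathbb{Z}^{d}$ and let $f\colon X\to \mathbb{R}^{d}$ be an $L$-bilipschitz mapping. Suppose that there exists $\lambda\geq 1$ such that $\mathbb{R}^{d}\subseteq \bigcup_{x\in X}\overline{B}(x,\lambda)$. Then there exists a bilipschitz extension $F\colon \mathbb{Z}^{d}\to\mathbb{R}^{d}$ of $f$ with \[\operatorname{Lip}(F)\leq 4\lambda L, \qquad \operatorname{Lip}(F^{-1})\leq 24\lambda^{2}L\sqrt{d}.\]
   Context: $\overline{B}(x,\lambda)$ is the closed Euclidean ball. $\operatorname{Lip}(g)=\sup_{x\neq y}\|g(y)-g(x)\|/\|y-x\|$. A mapping is $L$-bilipschitz if it is injective and both it and its inverse are $L$-Lipschitz. *)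

(* Defs.v *)
From mathcomp Require Import all_boot all_order all_algebra.
From mathcomp Require Import reals.
Set Implicit Arguments. Unset Strict Implicit. Unset Printing Implicit Defensive.
Import Order.TTheory GRing.Theory Num.Theory.
Local Open Scope ring_scope.

Definition enorm (R : realType) (d : nat) (v : 'rV[R]_d) : R :=
  Num.sqrt (\sum_(i < d) (v 0 i) ^+ 2).

Definition zemb (R : realType) (d : nat) (x : 'rV[int]_d) : 'rV[R]_d :=
  map_mx (fun z : int => z%:~R) x.

Definition zdist (R : realType) (d : nat) (x y : 'rV[int]_d) : R :=
  enorm (zemb R y - zemb R x).

Definition zlip_on (R : realType) (d : nat) (A : 'rV[int]_d -> Prop)
    (g : 'rV[int]_d -> 'rV[R]_d) (c : R) : Prop :=
  forall x y, A x -> A y -> enorm (g y - g x) <= c * zdist R x y.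

(* The inverse of g (on g(A)) is c-Lipschitz, i.e. Lip((g|A)^{-1}) <= c. *)
Definition zinvlip_on (R : realType) (d : nat) (A : 'rV[int]_d -> Prop)
    (g : 'rV[int]_d -> 'rV[R]_d) (c : R) : Prop :=
  forall x y, A x -> A y -> zdist R x y <= c * enorm (g y - g x).

Definition zbilip_on (R : realType) (d : nat) (A : 'rV[int]_d -> Prop)
    (g : 'rV[int]_d -> 'rV[R]_d) (L : R) : Prop :=
  (forall x y, A x -> A y -> g x = g y -> x = y) /\
  zlip_on A g L /\ zinvlip_on A g L.

(* Main.v *)
Require Import Defs.
From mathcomp Require Import all_boot all_order all_algebra.
From mathcomp Require Import reals.
From mathcomp Require Import zify ring lra.
From Stdlib Require Import ClassicalEpsilon.
Import Order.TTheory GRing.Theory Num.Theory.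
Local Open Scope ring_scope.


Lemma ssq_ge0 {R : realType} {d : nat} (v : 'rV[R]_d) : 0 <= \sum_(i < d) (v 0 i) ^+ 2.
Proof. by apply: sumr_ge0 => i _; exact: sqr_ge0. Qed.

Lemma enorm_ge0 {R : realType} {d : nat} (v : 'rV[R]_d) : 0 <= enorm v.
Proof. exact: sqrtr_ge0. Qed.

Lemma enormZ {R : realType} {d : nat} (c : R) (v : 'rV[R]_d) : enorm (c *: v) = `|c| * enorm v.
Proof.
rewrite /enorm.
under eq_bigr do rewrite mxE exprMn.
by rewrite -mulr_sumr sqrtrM ?sqr_ge0 // sqrtr_sqr.
Qed.

Lemma enormN {R : realType} {d : nat} (v : 'rV[R]_d) : enorm (- v) = enorm v.
Proof. by rewrite -scaleN1r enormZ normrN normr1 mul1r. Qed.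

Lemma enorm0 {R : realType} {d : nat} : enorm (0 : 'rV[R]_d) = 0.
Proof. by rewrite -(scale0r (0 : 'rV[R]_d)) enormZ normr0 mul0r. Qed.

Lemma enorm_eq0 {R : realType} {d : nat} (v : 'rV[R]_d) : enorm v = 0 -> v = 0.
Proof.
move=> /eqP; rewrite sqrtr_eq0 => H.
have H0 : \sum_(i < d) (v 0 i) ^+ 2 = 0.
  by apply/eqP; rewrite eq_le H ssq_ge0.
apply/matrixP => i j; rewrite ord1 mxE.
have := @psumr_eq0P _ _ _ _ (fun k _ => sqr_ge0 (v 0 k)) H0 j isT.
by move/eqP; rewrite sqrf_eq0 => /eqP.
Qed.

Lemma CS {R : realType} {d : nat} (a b : 'I_d -> R) :
  (\sum_i a i * b i) ^+ 2 <= (\sum_i a i ^+ 2) * (\sum_i b i ^+ 2).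
Proof.
set S := \sum_i a i * b i; set A := \sum_i a i ^+ 2; set B := \sum_i b i ^+ 2.
have E : \sum_i (B * a i - S * b i) ^+ 2 = B * (A * B - S ^+ 2).
  have -> : \sum_i (B * a i - S * b i) ^+ 2 =
     \sum_i (B ^+ 2 * a i ^+ 2 - (2 * B * S) * (a i * b i) + S ^+ 2 * b i ^+ 2).
    by apply: eq_bigr => i _; ring.
  rewrite big_split sumrB /= -!mulr_sumr -/A -/B -/S; ring.
have Bge : 0 <= B by apply: sumr_ge0 => i _; exact: sqr_ge0.
have Hge : 0 <= B * (A * B - S ^+ 2).
  by rewrite -E; apply: sumr_ge0 => i _; exact: sqr_ge0.
have [B0|Bpos] := eqVneq B 0.
  have bz : forall i, b i = 0.
    move=> i; have := @psumr_eq0P _ _ _ _ (fun k _ => sqr_ge0 (b k)) B0 i isT.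
    by move/eqP; rewrite sqrf_eq0 => /eqP.
  have -> : S = 0 by rewrite /S big1 // => i _; rewrite bz mulr0.
  by rewrite B0 expr0n /= mulr0.
have Bp : 0 < B by rewrite lt_def Bpos Bge.
by rewrite pmulr_rge0 // subr_ge0 in Hge.
Qed.

Lemma enormD {R : realType} {d : nat} (u v : 'rV[R]_d) : enorm (u + v) <= enorm u + enorm v.
Proof.
rewrite /enorm.
set A := \sum_(i < d) u 0 i ^+ 2; set B := \sum_(i < d) v 0 i ^+ 2.
have A0 : 0 <= A := ssq_ge0 u. have B0 : 0 <= B := ssq_ge0 v.
have -> : \sum_(i < d) (u + v) 0 i ^+ 2 = A + 2 * (\sum_i u 0 i * v 0 i) + B.
  rewrite /A /B mulr_sumr -!big_split /=. apply: eq_bigr => i _. rewrite !mxE. ring.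
have cs : \sum_i u 0 i * v 0 i <= Num.sqrt A * Num.sqrt B.
  rewrite -sqrtrM //; apply: le_trans (ler_norm _) _.
  by rewrite -sqrtr_sqr ler_wsqrtr // CS.
rewrite -(@ger0_norm _ (Num.sqrt A + Num.sqrt B)) ?addr_ge0 ?sqrtr_ge0 //.
rewrite -sqrtr_sqr ler_wsqrtr // sqrrD !sqr_sqrtr //.
lra.
Qed.

Lemma enormB {R : realType} {d : nat} (u v : 'rV[R]_d) : enorm u - enorm v <= enorm (u + v).
Proof.
rewrite lerBlDr; have := enormD (u + v) (- v).
by rewrite addrK enormN.
Qed.

Lemma int_sq_ge1 {R : realType} (k : int) : k != 0 -> 1 <= (k%:~R : R) ^+ 2.
Proof.
move=> k0; rewrite -rmorphXn.
have h : (1 <= k ^+ 2)%R by rewrite expr2; lia.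
by rewrite -(ler_int R) in h.
Qed.


Lemma zembB {R : realType} {d : nat} (x y : 'rV[int]_d) : zemb R y - zemb R x = zemb R (y - x).
Proof. by apply/matrixP => i j; rewrite !mxE rmorphB. Qed.

Lemma zemb_inj {R : realType} {d : nat} (x y : 'rV[int]_d) : zemb R x = zemb R y -> x = y.
Proof.
move/matrixP => H; apply/matrixP => i j; have := H i j; rewrite !mxE.
exact: intr_inj.
Qed.

Lemma zdist_ge1 {R : realType} {d : nat} (x y : 'rV[int]_d) : x != y -> 1 <= zdist R x y.
Proof.
move=> nxy.
have [j hj] : exists j, x 0 j != y 0 j.
  apply/existsP; apply: contraR nxy => /existsPn H; apply/eqP/matrixP => i k.
  by rewrite ord1; apply/eqP; have := H k; rewrite negbK.
rewrite /zdist zembB /enorm -sqrtr1 ler_wsqrtr //.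
rewrite (bigD1 j) //= -[1]addr0 lerD //; last by apply: sumr_ge0 => i _; exact: sqr_ge0.
rewrite !mxE; apply: int_sq_ge1; by rewrite subr_eq0 eq_sym.
Qed.

Lemma zdist_ge0 {R : realType} {d : nat} (x y : 'rV[int]_d) : 0 <= zdist R x y.
Proof. exact: enorm_ge0. Qed.

Theorem lemma4p2 (R : realType) (d : nat) (L lambda : R)
    (X : 'rV[int]_d -> Prop) (f : 'rV[int]_d -> 'rV[R]_d) :
  (2 <= d)%N -> 1 <= L ->
  zbilip_on X f L ->
  1 <= lambda ->
  (forall p : 'rV[R]_d, exists x, X x /\ enorm (p - zemb R x) <= lambda) ->
  exists F : 'rV[int]_d -> 'rV[R]_d,
    (forall x, X x -> F x = f x) /\
    injective F /\
    zlip_on (fun _ => True) F (4 * lambda * L) /\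
    zinvlip_on (fun _ => True) F (24 * lambda ^+ 2 * L * Num.sqrt d%:R).
Proof.
move=> d2 L1 [finj [flip finv]] lam1 cover.
have Hp : forall z, exists x, X x /\ enorm (zemb R z - zemb R x) <= lambda
                              /\ (X z -> x = z).
  move=> z; case: (classic (X z)) => Xz.
    exists z; split=> //; split=> //; rewrite subrr enorm0; lra.
  have [x [Xx hx]] := cover (zemb R z); exists x; by [].
pose p z := proj1_sig (constructive_indefinite_description _ (Hp z)).
have pP : forall z, X (p z) /\ enorm (zemb R z - zemb R (p z)) <= lambda
                              /\ (X z -> p z = z).
  move=> z; exact: (proj2_sig (constructive_indefinite_description _ (Hp z))).
pose del := (4 * lambda * L)^-1.
have del0 : 0 <= del by rewrite /del invr_ge0; nra.
have delE : del * (4 * lambda * L) = 1 by rewrite /del mulVf //; apply/eqP; nra.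
pose F z := f (p z) + del *: (zemb R z - zemb R (p z)).
have common : forall z w,
  let x := p z in let x' := p w in
  let u := zemb R z - zemb R x in let u' := zemb R w - zemb R x' in
  [/\ F w - F z = (f x' - f x) + del *: (u' - u),
      zemb R x' - zemb R x = (zemb R w - zemb R z) + - (u' - u),
      zemb R w - zemb R z = (zemb R x' - zemb R x) + (u' - u),
      enorm (u' - u) <= 2 * lambda & X x /\ X x'].
  move=> z w x x' u u'.
  have [Xx [hu _]] := pP z; have [Xx' [hu' _]] := pP w.
  split.
  - by apply/matrixP => i j; rewrite /F !mxE; ring.
  - by apply/matrixP => i j; rewrite /u /u' !mxE; ring.
  - by apply/matrixP => i j; rewrite /u /u' !mxE; ring.
  - have := enormD u' (- u). rewrite enormN. lra.
  - by [].
have lipF : zlip_on (fun _ => True) F (4 * lambda * L).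
  move=> z w _ _.
  have [<-|nzw] := eqVneq z w.
    rewrite subrr enorm0 mulr_ge0 //; [nra | exact: zdist_ge0].
  have D1 := zdist_ge1 (R:=R) _ _ nzw.
  have [E1 E2 _ Huu [Xx Xx']] := common z w.
  rewrite E1 /zdist; rewrite /zdist in D1.
  set D := enorm (zemb R w - zemb R z) in D1 *.
  set Nuu := enorm _ in Huu.
  have h1 : enorm (f (p w) - f (p z) + del *: (zemb R w - zemb R (p w) - (zemb R z - zemb R (p z))))
            <= enorm (f (p w) - f (p z)) + del * Nuu.
    by apply: le_trans (enormD _ _) _; rewrite enormZ ger0_norm.
  have h2 : enorm (f (p w) - f (p z)) <= L * (D + Nuu).
    apply: le_trans (flip _ _ Xx Xx') _; rewrite ler_wpM2l //; first lra.
    by rewrite /zdist E2; apply: le_trans (enormD _ _) _; rewrite enormN.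
  have h3 : del * Nuu <= del * (2 * lambda) by rewrite ler_wpM2l.
  have dl : 0 <= del * lambda by nra.
  have h4 : del * (2 * lambda) * 2 <= 1.
    have : (del * lambda) * 1 <= (del * lambda) * L by rewrite ler_wpM2l.
    nra.
  have LD : 1 <= L * D by nra.
  have lL : 1 <= lambda * L by nra.
  have h5 : L * D <= lambda * L * D.
    have : 1 * (L * D) <= lambda * (L * D) by rewrite ler_wpM2r //; lra.
    by rewrite mul1r mulrA.
  have h6 : lambda * L <= lambda * L * D.
    have : (lambda * L) * 1 <= (lambda * L) * D by rewrite ler_wpM2l //; lra.
    by rewrite mulr1.
  have h7 : 1 <= lambda * L * D by lra.
  have h8 : L * Nuu <= L * (2 * lambda) by rewrite ler_wpM2l //; lra.
  nra.
have invF6 : forall z w, zdist R z w <= 6 * lambda * L * enorm (F w - F z).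
  move=> z w.
  have [E1 E2 E3 Huu [Xx Xx']] := common z w.
  rewrite /zdist E1.
  set D := enorm (zemb R w - zemb R z).
  set Nuu := enorm _ in Huu.
  have [exx|nxx] := eqVneq (p z) (p w).
    have -> : f (p w) - f (p z) + del *: (zemb R w - zemb R (p w) - (zemb R z - zemb R (p z)))
              = del *: (zemb R w - zemb R z).
      by rewrite -exx subrr add0r; congr (_ *: _); apply/matrixP => i j; rewrite !mxE; ring.
    rewrite enormZ ger0_norm // /D.
    have := enorm_ge0 (zemb R w - zemb R z); nra.
  have Eg1 := zdist_ge1 (R:=R) _ _ nxx.
  have hE := finv _ _ Xx Xx'.
  move: Eg1 hE; rewrite /zdist; set E := enorm (zemb R (p w) - zemb R (p z)) => Eg1 hE.
  set Nf := enorm (f (p w) - f (p z)) in hE.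
  have hB : Nf - del * Nuu <= enorm (f (p w) - f (p z) + del *: (zemb R w - zemb R (p w) - (zemb R z - zemb R (p z)))).
    by have := enormB (f (p w) - f (p z)) (del *: (zemb R w - zemb R (p w) - (zemb R z - zemb R (p z)))); rewrite enormZ ger0_norm.
  set NF := enorm _ in hB *.
  have hD : D <= E + Nuu by rewrite /D E3; exact: enormD.
  have h3 : del * Nuu <= del * (2 * lambda) by rewrite ler_wpM2l.
  have h4 : L * (del * (2 * lambda)) * 2 = 1.
    have -> : L * (del * (2 * lambda)) * 2 = del * (4 * lambda * L) by ring.
    exact: delE.
  have h5 : L * (del * Nuu) <= L * (del * (2 * lambda)) by rewrite ler_wpM2l //; lra.
  have hBL : L * (Nf - del * Nuu) <= L * NF by rewrite ler_wpM2l //; lra.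
  have a : E <= 2 * (L * NF) by lra.
  have pp : 0 <= (lambda - 1) * (E - 1) by apply: mulr_ge0; lra.
  have b : D <= 3 * lambda * E by lra.
  have c : lambda * E <= lambda * (2 * (L * NF)) by rewrite ler_wpM2l //; lra.
  lra.
have invF : zinvlip_on (fun _ => True) F (24 * lambda ^+ 2 * L * Num.sqrt d%:R).
  move=> z w _ _; apply: le_trans (invF6 z w) _.
  have s1 : 1 <= Num.sqrt (d%:R : R).
    have h1 : (1 : R) <= d%:R by rewrite ler1n; apply: leq_trans d2.
    by have := ler_wsqrtr h1; rewrite sqrtr1.
  have := enorm_ge0 (F w - F z); set NF := enorm _ => NF0.
  have h : 6 * lambda * L <= 24 * lambda ^+ 2 * L * Num.sqrt d%:R.
    have l2 : lambda <= lambda ^+ 2 by rewrite expr2; nra.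
    have r : lambda * L <= lambda ^+ 2 * L by rewrite ler_wpM2r //; lra.
    have q : lambda ^+ 2 * L * 1 <= lambda ^+ 2 * L * Num.sqrt d%:R.
      by rewrite ler_wpM2l // mulr_ge0 // ?sqr_ge0 //; lra.
    have l2L : 0 <= lambda ^+ 2 * L by rewrite mulr_ge0 // ?sqr_ge0 //; lra.
    rewrite mulr1 in q; lra.
  by rewrite ler_wpM2r.
exists F; split; last split; last by split.
- move=> x Xx; have [_ [_ e]] := pP x; by rewrite /F (e Xx) subrr scaler0 addr0.
- move=> z w eF.
  have := invF w z I I; rewrite eF subrr enorm0 mulr0 => h.
  have : zdist R w z = 0 by apply/eqP; rewrite eq_le h zdist_ge0.
  by move/enorm_eq0/eqP; rewrite subr_eq0 => /eqP/zemb_inj.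
Qed.
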